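(* Let $\gamma\in(2/3,1)$ and consider the TBRW started at a finite initial condition $(T,x)$ with $\mathcal L_n=\mathrm{Ber}(n^{-\gamma})$. Then for every $\varepsilon<\frac{\gamma}{1-\gamma}-2$, \[ \mathbb P_{T,x;\mathcal L}\big(\Delta\tau_i<i^{1+\varepsilon}\text{ for infinitely many } i\big)=0 . \]
   Context: Tree Builder Random Walk (TBRW). Let $\mathcal L=(\mathcal L_n)_{n\ge1}$ be a sequence of probability laws on $\{0,1,2,\dots\}$ and let $(T_0,x_0)$ be an initial condition: $T_0$ is a finite rooted tree with a single self-loop attached at its root, and $x_0$ is a vertex of $T_0$. Let $(Z_n)_{n\ge1}$ be independent random variables with $Z_n\sim\mathcal L_n$. The TBRW is the process $((T_n,X_n))_{n\ge0}$ with $(T_0,X_0)=(T_0,x_0)$ where, for $n\ge1$, $T_n$ is obtained from $T_{n-1}$ by attaching $Z_n$ new leaves to $X_{n-1}$, and then $X_n$ is obtained by one step of simple random walk on $T_n$ from $X_{n-1}$ (self-loop counted twice in degrees; moves along a uniformly chosen edge-end). Its law is $\mathbb P_{T_0,x_0;\mathcal L}$. Growth times: $\tau_0=0$, $\tau_k=\inf\{n>\tau_{k-1}:Z_n\ge1\}$; $\Delta\tau_k=\tau_{k+1}-\tau_k$. *)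

(* Defs.v *)
From HB Require Import structures.
From mathcomp Require Import all_boot all_order all_algebra.
From mathcomp Require Import all_classical all_reals all_analysis.
Set Implicit Arguments. Unset Strict Implicit. Unset Printing Implicit Defensive.
Import Order.TTheory GRing.Theory Num.Theory.
Local Open Scope classical_set_scope.
Local Open Scope ring_scope.

(* Growth times of a TBRW, as a function of the sequence z = (Z_n)_{n>=1}
   of numbers of added leaves:
     tau_0 = 0,  tau_k = inf { n > tau_{k-1} : z n >= 1 }.
   [None] encodes tau_k = +oo (infimum of the empty set, or tau_{k-1} = +oo). *)
Fixpoint growth_time (z : nat -> nat) (k : nat) : option nat :=
  match k with
  | 0 => Some 0%N
  | k'.+1 =>
      match growth_time z k' with
      | None => None
      | Some t =>
          match pselect (exists n, (t < n)%N && (0 < z n)%N) with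
          | left h => Some (ex_minn h)
          | right _ => None
          end
      end
  end.

(* "Delta tau_i < i^(1+eps)", with Delta tau_i = tau_{i+1} - tau_i
   (false when tau_{i+1} = +oo, since then Delta tau_i = +oo). *)
Definition short_gap (R : realType) (eps : R) (z : nat -> nat) (i : nat) : Prop :=
  exists t t' : nat, growth_time z i = Some t /\ growth_time z i.+1 = Some t' /\
    ((t' - t)%:R : R) < (i%:R) `^ (1 + eps).

Definition short_gap_io (R : realType) (eps : R) (z : nat -> nat) : Prop :=
  forall N : nat, exists i : nat, (N <= i)%N /\ short_gap eps z i.

Definition bernoulli_growth_seq d (T : measurableType d) (R : realType)
    (P : probability T R) (gamma : R) (Z : nat -> T -> nat) : Prop :=
  (forall n k : nat, measurable (Z n @^-1` [set k])) /\
  (forall n : nat, (0 < n)%N ->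
     P (Z n @^-1` [set 1%N]) = ((n%:R : R) `^ (- gamma))%:E /\
     P (Z n @^-1` [set 0%N]) = (1 - (n%:R : R) `^ (- gamma))%:E) /\
  (forall (s : seq nat) (v : nat -> nat), uniq s -> all (fun i => 0 < i)%N s ->
     P (\big[setI/setT]_(i <- s) (Z i @^-1` [set v i])) =
     (\prod_(i <- s) P (Z i @^-1` [set v i]))%E).

(* Main.v *)
Require Import Defs.
From HB Require Import structures.
From mathcomp Require Import all_boot all_order all_algebra.
From mathcomp Require Import all_classical all_reals all_analysis.
From mathcomp Require Import ring lra measurable_realfun.
Import Order.TTheory GRing.Theory Num.Theory.
Local Open Scope classical_set_scope.
Local Open Scope ring_scope.


Lemma gt_succ (z : nat -> nat) k t' :
  growth_time z k.+1 = Some t' <->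
  exists t, growth_time z k = Some t /\ (t < t')%N /\ (0 < z t')%N /\
     forall n, (t < n < t')%N -> z n = 0%N.
Proof.
rewrite /=; case: (growth_time z k) => [t|]; last first.
  by split=> // -[t [] ].
case: pselect => [h|nh].
- case: ex_minnP => m /andP[tm zm] mmin; split.
    case=> <-; exists t; split=> //; split=> //; split=> // n /andP[tn nm].
    apply/eqP; rewrite -leqn0 leqNgt; apply/negP => zn.
    by have := mmin n; rewrite tn zn => /(_ isT); rewrite leqNgt nm.
  case=> _ [[<-] [tt' [zt' H]]]; congr Some; apply/eqP; rewrite eqn_leq.
  rewrite mmin ?tt' ?zt' //=; rewrite leqNgt; apply/negP => t'm.
  by have := H m; rewrite tm t'm => /(_ isT) zm0; rewrite zm0 in zm.
- split=> // -[_ [[<-] [tt' [zt' _]]]]; exfalso; apply: nh.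
  by exists t'; rewrite tt' zt'.
Qed.

Definition cntz (z : nat -> nat) (t : nat) : nat := \sum_(0 <= j < t) (0 < z j.+1)%N.

Lemma cntz_mono z t u : (t <= u)%N -> (cntz z t <= cntz z u)%N.
Proof. by move=> tu; rewrite /cntz (@big_cat_nat _ _ _ t 0 u _ _ (leq0n t) tu) /= leq_addr. Qed.

Lemma cntz_le z t : (cntz z t <= t)%N.
Proof.
rewrite /cntz; elim: t => [|t IH]; first by rewrite big_geq.
by rewrite big_nat_recr //= -[t.+1]addn1 leq_add // leq_b1.
Qed.

Lemma gt_cnt z i t : growth_time z i = Some t ->
  cntz z t = i /\ (0 < i -> 0 < z t)%N.
Proof.
elim: i t => [|i IH] t'.
  by case=> <-; rewrite /cntz big_geq.
case/gt_succ => t [gi [tt' [zt' H]]]; split=> //.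
have [IH1 _] := IH _ gi.
rewrite /cntz (@big_cat_nat _ _ _ t 0 t' _ _ (leq0n t) (ltnW tt')) /= -/(cntz z t) IH1.
rewrite -[i.+1]addn1; congr addn.
move: tt'; case: t' zt' H => // t' zt' H tt'.
rewrite ltnS in tt'.
rewrite big_nat_recr //= zt' addn1; congr S.
rewrite big_nat_cond big1 // => j /andP[/andP[tj jt] _].
by rewrite H // ltnS tj ltnS.
Qed.


Section Meas.
Context d (T : measurableType d) (Z : nat -> T -> nat).
Hypothesis mZ : forall n k, measurable (Z n @^-1` [set k]).

Lemma mconst (Q : Prop) : measurable [set _ : T | Q].
Proof.
case: (pselect Q) => q.
  by rewrite (_ : [set _ | Q] = setT) //; apply/seteqP; split.
by rewrite (_ : [set _ | Q] = set0) //; apply/seteqP; split.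
Qed.

Definition GT i t := [set w | growth_time (fun n => Z n w) i = Some t].

Lemma mGT i t : measurable (GT i t).
Proof.
elim: i t => [|i IH] t'.
  rewrite (_ : GT 0 t' = [set _ | 0%N = t']); first exact: mconst.
  by apply/seteqP; split => w; rewrite /GT /=; [case|move=> <-].
rewrite (_ : GT i.+1 t' = \bigcup_(t in [set t | (t < t')%N])
   (GT i t `&` ~` (Z t' @^-1` [set 0%N]) `&`
    \bigcap_(n in [set n | (t < n < t')%N]) (Z n @^-1` [set 0%N]))).
  apply: bigcup_measurable => t _; apply: measurableI; first apply: measurableI.
  - exact: IH.
  - exact/measurableC/mZ.
  - by apply: bigcap_measurableType => n _; exact: mZ.
apply/seteqP; split => w.
  rewrite /GT /= => /gt_succ [t [gi [tt' [zt' H]]]].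
  exists t => //; split; [split => //|].
    by rewrite /= => E; rewrite E in zt'.
  by move=> n /= /H.
case=> t /= tt' [[gi zt'] H]; apply/gt_succ; exists t; split=> //; split=> //.
split; first by rewrite lt0n; apply/eqP.
by move=> n /H.
Qed.

Lemma mS (R : realType) (eps : R) :
  measurable [set w | short_gap_io eps (fun n => Z n w)].
Proof.
rewrite (_ : [set w | _] = \bigcap_N \bigcup_(i in [set i | (N <= i)%N])
  \bigcup_t \bigcup_t' (GT i t `&` GT i.+1 t' `&`
     [set _ | ((t' - t)%:R : R) < (i%:R) `^ (1 + eps)])).
  apply: bigcapT_measurable => N; apply: bigcup_measurable => i _.
  apply: bigcupT_measurable => t; apply: bigcupT_measurable => t'.
  apply: measurableI; last exact: mconst.
  by apply: measurableI; exact: mGT.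
apply/seteqP; split => w.
  move=> H N _; have [i [Ni [t [t' [g1 [g2 c]]]]]] := H N.
  by exists i => //; exists t => //; exists t' => //.
move=> H N; have [i /= Ni [t _ [t' _ [[g1 g2] c]]]] := H N I.
by exists i; split => //; exists t, t'.
Qed.

End Meas.


Section Reals.
Variable R : realType.

Definition E (x : R) := expR (x * ln 2).

Lemma ln2_gt0 : 0 < ln (2:R).
Proof. by apply: ln_gt0; rewrite ltr1n. Qed.

Lemma E_gt0 x : 0 < E x. Proof. exact: expR_gt0. Qed.
Lemma E_D x y : E (x + y) = E x * E y.
Proof. by rewrite /E mulrDl expRD. Qed.
Lemma E_X x k : E x ^+ k = E (x * k%:R).
Proof. by rewrite /E -expRM_natr; congr expR; rewrite mulrAC. Qed.
Lemma E_lt1 x : x < 0 -> E x < 1.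
Proof. by move=> x0; rewrite /E expR_lt1; have := ln2_gt0; nra. Qed.
Lemma E_gt1 x : 0 < x -> 1 < E x.
Proof. by move=> x0; rewrite /E expR_gt1; have := ln2_gt0; nra. Qed.
Lemma E1 : E 1 = 2.
Proof. by rewrite /E mul1r lnK // posrE. Qed.

Lemma pow_nat_le (g : R) n k : 0 <= g -> (2 ^ k <= n)%N ->
  (n%:R : R) `^ (- g) <= E (- g) ^+ k.
Proof.
move=> g0 kn; have n0 : (0 < n)%N by apply: leq_trans kn; rewrite expn_gt0.
rewrite E_X /E /powR pnatr_eq0 (negbTE (lt0n_neq0 n0)) /= ler_expR.
have : ln (2 ^+ k : R) <= ln (n%:R).
  rewrite ler_ln ?posrE ?exprn_gt0 ?ltr0n //.
  by rewrite -natrX ler_nat.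
rewrite lnXn // -mulr_natr => h.
have L0 := ln2_gt0; nra.
Qed.

Lemma powR_EX x e k : (E x ^+ k) `^ e = E (x * e) ^+ k.
Proof.
rewrite /powR gt_eqF ?exprn_gt0 ?E_gt0 //.
rewrite lnXn ?E_gt0 // /E expRK -expRM_natr; congr expR.
rewrite -mulr_natr; ring.
Qed.

Lemma sum_bound (g : R) k : 0 <= g -> g < 1 ->
  \sum_(0 <= j < 2 ^ k) (j.+1%:R : R) `^ (- g) <=
  (E (1 - g) / (E (1 - g) - 1)) * E (1 - g) ^+ k.
Proof.
move=> g0 g1; set s := E (1 - g).
have s1 : 1 < s by apply: E_gt1; lra.
have sE : s = 2 * E (- g) by rewrite /s E_D E1.
elim: k => [|k IH].
  rewrite expn0 big_nat1 expr0 mulr1 powR1 ler_pdivlMr ?subr_gt0 //; lra.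
rewrite expnS mul2n -addnn (@big_cat_nat _ _ _ (2 ^ k) 0 _ _ _ (leq0n _)) ?leq_addr //=.
have H2 : \sum_(2 ^ k <= j < 2 ^ k + 2 ^ k) (j.+1%:R : R) `^ (- g) <= s ^+ k.
  apply: (@le_trans _ _ (\sum_(2 ^ k <= j < 2 ^ k + 2 ^ k) E (- g) ^+ k)).
    rewrite big_nat [X in _ <= X]big_nat; apply: ler_sum => j /andP[kj _].
    by apply: pow_nat_le => //; apply: leq_trans kj _.
  by rewrite sumr_const_nat addnK sE exprMn -[E (- g) ^+ k *+ 2 ^ k]mulr_natl natrX.
apply: (le_trans (lerD IH H2)).
have sk : 0 < s ^+ k by rewrite exprn_gt0 // (lt_trans _ s1).
rewrite exprS; set c := s / (s - 1); set x := s ^+ k in sk *.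
have cE : c * (s - 1) = s.
  rewrite /c; field; rewrite subr_eq0; apply/eqP => h; rewrite h in s1; lra.
nra.
Qed.

End Reals.


Section Prob.
Context d (T : measurableType d) (R : realType) (P : probability T R)
  (gamma : R) (Z : nat -> T -> nat).
Hypothesis hZ : bernoulli_growth_seq P gamma Z.
Hypothesis g0 : 0 <= gamma.

Definition A j := ~` (Z j @^-1` [set 0%N]).

Lemma mZ n k : measurable (Z n @^-1` [set k]).
Proof. by case: hZ => h _; exact: h. Qed.

Lemma mA j : measurable (A j).
Proof. exact/measurableC/mZ. Qed.

Lemma PA j : (0 < j)%N -> P (A j) = ((j%:R : R) `^ (- gamma))%:E.
Proof.
move=> j0; case: hZ => _ [h _]; have [_ h0] := h j j0.
rewrite /A probability_setC; last exact: mZ.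
by rewrite h0 -[1%E]/(1%:E) -EFinB subKr.
Qed.

Lemma Pbad j : (0 < j)%N ->
  P (~` (Z j @^-1` [set 0%N] `|` Z j @^-1` [set 1%N])) = 0%E.
Proof.
move=> j0; case: hZ => _ [h _]; have [h1 h0] := h j j0.
rewrite probability_setC; last by apply: measurableU; exact: mZ.
rewrite measureU; [|exact: mZ|exact: mZ|]; last first.
  by apply/seteqP; split => w //= [-> ].
move: h0 h1; rewrite /preimage /= => -> ->.
by rewrite -EFinD subrK subrr.
Qed.

Lemma Ppair a b : (0 < a)%N -> (a < b)%N ->
  (P (A a `&` A b) <= ((a%:R : R) `^ (- gamma) * (b%:R : R) `^ (- gamma))%:E)%E.
Proof.
move=> a0 ab; have b0 : (0 < b)%N by apply: leq_trans ab.
set F1 := Z a @^-1` [set 1%N] `&` Z b @^-1` [set 1%N].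
set Ba := ~` (Z a @^-1` [set 0%N] `|` Z a @^-1` [set 1%N]).
set Bb := ~` (Z b @^-1` [set 0%N] `|` Z b @^-1` [set 1%N]).
have mBa : measurable Ba by apply/measurableC/measurableU; exact: mZ.
have mBb : measurable Bb by apply/measurableC/measurableU; exact: mZ.
have mF1 : measurable F1 by apply: measurableI; exact: mZ.
have sub : A a `&` A b `<=` F1 `|` (Ba `|` Bb).
  move=> w [/= za zb]; rewrite /F1 /Ba /Bb /=.
  case: (Z a w =P 1%N) => [ea|na]; last first.
    by right; left => -[|].
  case: (Z b w =P 1%N) => [eb|nb]; last first.
    by right; right => -[|].
  by left.
apply: (le_trans (le_measure _ _ _ sub)).
- by rewrite inE; apply: measurableI; exact: mA.
- by rewrite inE; apply: measurableU => //; exact: measurableU.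
apply: (le_trans (measureU2 _ _ _)) => //; first exact: measurableU.
apply: (le_trans (leeD (lexx _) (measureU2 _ mBa mBb))).
rewrite [X in (_ + (X + _))%E](_ : _ = 0%E); last exact: Pbad.
rewrite [X in (_ + (_ + X))%E](_ : _ = 0%E); last exact: Pbad.
rewrite !adde0.
case: hZ => _ [h hind].
have U : uniq [:: a; b] by rewrite /= inE andbT neq_ltn ab.
have Al : all (fun i => 0 < i)%N [:: a; b] by rewrite /= a0 b0.
have := hind [:: a; b] (fun _ => 1%N) U Al.
rewrite !big_cons !big_nil setIT mule1 => E1.
apply: (le_trans (_ : _ <= P F1)%E); first exact: lexx.
by rewrite /F1 E1 (proj1 (h a a0)) (proj1 (h b b0)).
Qed.

End Prob.
Arguments A {d T} Z j _.
Arguments mZ {d T R P gamma Z} hZ n k.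
Arguments mA {d T R P gamma Z} hZ j.
Arguments PA {d T R P gamma Z} hZ j.
Arguments Ppair {d T R P gamma Z} hZ a b.


Section Markov.
Context d (T : measurableType d) (R : realType) (P : probability T R)
  (gamma : R) (Z : nat -> T -> nat).
Hypothesis hZ : bernoulli_growth_seq P gamma Z.

Definition G k (w : T) : \bar R :=
  (\sum_(0 <= j < 2 ^ k) (\1_(A Z j.+1) w : R)%:E)%E.

Definition Dset k (c : R) := setT `&` [set w | (c%:E <= `|G k w|)%E].

Lemma mG k : measurable_fun setT (G k).
Proof.
apply: emeasurable_sum => j; apply/measurable_EFinP.
by apply: measurable_indic; exact: (mA hZ).
Qed.

Lemma mDset k c : measurable (Dset k c).
Proof.
apply: emeasurable_fun_c_infty => //; apply: measurableT_comp => //.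
exact: mG.
Qed.

Lemma PD k c : 0 < c ->
  (P (Dset k c) <= (c^-1 * \sum_(0 <= j < 2 ^ k) (j.+1%:R : R) `^ (- gamma))%:E)%E.
Proof.
move=> c0; rewrite EFinM lee_pdivlMl //.
have := @le_integral_comp_abse _ _ _ P setT measurableT (G k) c id
  (@measurable_id _ _ setT) (fun r h => h) (fun x y _ _ h => h) (mG k) c0.
rewrite /= => H; apply: (le_trans H).
rewrite le_eqVlt; apply/orP; left; apply/eqP.
transitivity (\int[P]_(x in setT) G k x)%E.
  apply: eq_integral => x _; rewrite gee0_abs //.
  by apply: sume_ge0 => j _; rewrite lee_fin indicE.
rewrite /G (@ge0_integral_sum _ _ _ P setT measurableT) //.
rewrite -sumEFin; apply: eq_bigr => j _.
rewrite (integral_indic _ measurableT); last exact: (mA hZ).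
by rewrite setIT; apply: (PA hZ).
by move=> j; apply/measurable_EFinP; apply: measurable_indic; exact: (mA hZ).
Qed.

End Markov.
Arguments G {d T R} Z k w.
Arguments Dset {d T R} Z k c.
Arguments mG {d T R P gamma Z} hZ k.
Arguments mDset {d T R P gamma Z} hZ k c.
Arguments PD {d T R P gamma Z} hZ k c _.


Section Pairs.
Context d (T : measurableType d) (R : realType) (P : probability T R)
  (gamma : R) (Z : nat -> T -> nat).
Hypothesis hZ : bernoulli_growth_seq P gamma Z.
Hypothesis g0 : 0 <= gamma.

Lemma G_cnt k w : G Z k w = ((cntz (fun n => Z n w) (2 ^ k))%:R : R)%:E.
Proof.
rewrite /G /cntz sumEFin natr_sum; congr EFin; apply: eq_bigr => j _.
rewrite indicE; congr (_%:R).
congr nat_of_bool; apply/idP/idP => [/set_mem h|h].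
  by rewrite lt0n; apply/eqP; exact: h.
by apply: mem_set => /= e; rewrite e in h.
Qed.

Definition Lk (q : R) k := Num.truncn (q ^+ k.+1).

Definition Bk (q : R) k := \big[setU/set0]_(n < 2 ^ k) \big[setU/set0]_(dd < Lk q k)
   (A Z (2 ^ k + n) `&` A Z (2 ^ k + n + dd.+1)).

Lemma mBk q k : measurable (Bk q k).
Proof.
apply: bigsetU_measurable => n _; apply: bigsetU_measurable => dd _.
by apply: measurableI; exact: (mA hZ).
Qed.

Lemma PBk q k : (P (Bk q k) <=
  ((E R (- gamma) ^+ k * E R (- gamma) ^+ k) *+ Lk q k *+ 2 ^ k)%:E)%E.
Proof.
set c := E R (- gamma) ^+ k * E R (- gamma) ^+ k.
have pc : forall n dd, (P (A Z (2 ^ k + n) `&` A Z (2 ^ k + n + dd.+1)) <= c%:E)%E.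
  move=> n dd; apply: (le_trans (Ppair hZ _ _ _ _)).
  - by rewrite addn_gt0 expn_gt0.
  - by rewrite addnS ltnS leq_addr.
  rewrite lee_fin /c; apply: ler_pM; rewrite ?powR_ge0 //.
    by apply: pow_nat_le => //; rewrite leq_addr.
  by apply: pow_nat_le => //; rewrite -addnA leq_addr.
apply: (le_trans (@Boole_inequality _ _ _ P (fun n =>
   \big[setU/set0]_(dd < Lk q k) (A Z (2 ^ k + n) `&` A Z (2 ^ k + n + dd.+1))) (2 ^ k) _)).
  move=> n _; apply: bigsetU_measurable => dd _.
  by apply: measurableI; exact: (mA hZ).
rewrite (_ : c *+ Lk q k *+ 2 ^ k = \sum_(i < 2 ^ k) (c *+ Lk q k)); last first.
  by rewrite sumr_const card_ord.
rewrite -sumEFin; apply: lee_sum => n _.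
apply: (le_trans (@Boole_inequality _ _ _ P (fun dd =>
   (A Z (2 ^ k + n) `&` A Z (2 ^ k + n + dd.+1))) (Lk q k) _)).
  by move=> dd _; apply: measurableI; exact: (mA hZ).
rewrite (_ : c *+ Lk q k = \sum_(i < Lk q k) c); last first.
  by rewrite sumr_const card_ord.
rewrite -sumEFin.
by apply: lee_sum => dd _; exact: pc.
Qed.

End Pairs.
Arguments G_cnt {d T R} Z k w.
Arguments Lk {R} q k.
Arguments Bk {d T R} Z q k.
Arguments mBk {d T R P gamma Z} hZ q k.
Arguments PBk {d T R P gamma Z} hZ g0 q k.


Lemma geo_fin (R : realType) (c x : R) : 0 <= c -> 0 < x -> x < 1 ->
  (\sum_(n <oo) ((c * x ^+ n)%:E) < +oo)%E.
Proof.
move=> c0 x0 x1.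
apply: (@le_lt_trans _ _ ((c * (1 - x)^-1)%:E)); last exact: ltry.
apply: lime_le.
  by apply: is_cvg_nneseries => n _ _; rewrite lee_fin mulr_ge0 // exprn_ge0 // ltW.
apply: nearW => n; rewrite sumEFin lee_fin.
have nx : `|x| < 1 by rewrite ger0_norm // ltW.
have := @geometric_le_lim R n c x c0 x0 nx.
by rewrite /series /= /geometric /=.
Qed.

Lemma params (R : realType) (g e0 : R) : 2 / 3 < g -> g < 1 ->
  e0 < g / (1 - g) - 2 ->
  exists e a, [/\ 0 <= e, e0 <= e, 1 - g < a & a * (1 + e) < 2 * g - 1].
Proof.
move=> g23 g1 he.
set e := Num.max e0 0.
have e0e : e0 <= e by rewrite /e le_max lexx.
have ge : 0 <= e by rewrite /e le_max lexx orbT.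
have h1 : (e + 2) * (1 - g) < g.
  set B := g / (1 - g) in he.
  have hB : B * (1 - g) = g by rewrite /B mulfVK //; apply/eqP; lra.
  have B2 : 2 < B by nra.
  have eB : e < B - 2 by rewrite /e; case: (leP e0 0) => _ //; lra.
  nra.
exists e, (((1 - g) + (2 * g - 1) / (1 + e)) / 2); split => //.
  have : (1 - g) < (2 * g - 1) / (1 + e) by rewrite ltr_pdivlMr; lra.
  lra.
rewrite mulrAC mulrDl mulfVK; last by apply/eqP; lra.
lra.
Qed.


Lemma mlimsup d (T : measurableType d) (F : (set T)^nat) :
  (forall k, measurable (F k)) -> measurable (lim_sup_set F).
Proof.
move=> mF; apply: bigcapT_measurable => n.
by apply: bigcup_measurable => j _; exact: mF.
Qed.

Lemma in_bigsetU (U : Type) n (F : nat -> set U) x j : (j < n)%N -> F j x ->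
  (\big[setU/set0]_(i < n) F i) x.
Proof. by move=> jn Fx; rewrite -bigcup_mkord; exists j. Qed.

Theorem lemma4p2 (d : measure_display) (T : measurableType d) (R : realType)
    (P : probability T R) (gamma eps : R) (Z : nat -> T -> nat) :
  2 / 3 < gamma -> gamma < 1 ->
  bernoulli_growth_seq P gamma Z ->
  eps < gamma / (1 - gamma) - 2 ->
  P [set w | short_gap_io eps (fun n => Z n w)] = 0%E.
Proof.
move=> g23 g1 hZ heps.
have g0 : 0 <= gamma by lra.
have [e [a [e0 ee a1 a2]]] := @params R _ _ g23 g1 heps.
set r := E R (- gamma); set s := E R (1 - gamma); set sig := E R a.
set q := E R (a * (1 + e)).
set rho1 := E R (1 - gamma - a).
set rho2 := E R (1 + a * (1 + e) - 2 * gamma).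
have s1 : 1 < s by apply: E_gt1; lra.
have sig0 : 0 < sig by exact: E_gt0.
have q0 : 0 < q by exact: E_gt0.
have r0 : 0 < r by exact: E_gt0.
have rho10 : 0 < rho1 by exact: E_gt0.
have rho20 : 0 < rho2 by exact: E_gt0.
have rho11 : rho1 < 1 by apply: E_lt1; lra.
have rho21 : rho2 < 1 by apply: E_lt1; lra.
have hs : s = rho1 * sig by rewrite /s /rho1 /sig -E_D; congr (E R _); ring.
have hrho2 : rho2 = 2 * q * r * r.
  by rewrite -(E1 R) /q /r -!E_D /rho2; congr (E R _); ring.
set c1 := s / (s - 1).
have c10 : 0 <= c1 by rewrite /c1 divr_ge0 //; lra.
pose Dk k := Dset Z k (sig ^+ k).
pose Bq k := Bk Z q k.
have mD : forall k, measurable (Dk k) by move=> k; exact: (mDset hZ).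
have mB : forall k, measurable (Bq k) by move=> k; exact: (mBk hZ).
have PDk : forall k, (P (Dk k) <= (c1 * rho1 ^+ k)%:E)%E.
  move=> k; apply: le_trans; first apply: (PD hZ); first exact: exprn_gt0.
  rewrite lee_fin.
  apply: (@le_trans _ _ (sig ^- k * (c1 * s ^+ k))).
    apply: ler_wpM2l; first by rewrite invr_ge0 exprn_ge0 // ltW.
    exact: (@sum_bound R gamma k g0 g1).
  rewrite -/s -/c1 hs exprMn le_eqVlt; apply/orP; left; apply/eqP.
  by field; apply: expf_neq0; rewrite gt_eqF.
have PBq : forall k, (P (Bq k) <= (q * rho2 ^+ k)%:E)%E.
  move=> k; apply: le_trans; first exact: (PBk hZ g0 q k).
  rewrite lee_fin -/r.
  have hL : (Lk q k)%:R <= q ^+ k.+1 by rewrite truncn_le exprn_ge0 // ltW.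
  set X := r ^+ k * r ^+ k * 2 ^+ k.
  have X0 : 0 <= X by rewrite /X !mulr_ge0 // exprn_ge0 // ltW.
  have -> : r ^+ k * r ^+ k *+ Lk q k *+ 2 ^ k = X * (Lk q k)%:R.
    by rewrite /X -[_ *+ 2 ^ k]mulr_natr -[_ *+ Lk q k]mulr_natr natrX; ring.
  have -> : q * rho2 ^+ k = X * q ^+ k.+1.
    by rewrite hrho2 /X !exprMn exprS; ring.
  exact: ler_wpM2l.
have PlsD : P (lim_sup_set Dk) = 0%E.
  apply: lim_sup_set_cvg0 => //.
  apply: le_lt_trans; first apply: (lee_nneseries (v := fun k => (c1 * rho1 ^+ k)%:E)).
  - by move=> *; exact: measure_ge0.
  - by move=> n _; exact: PDk.
  exact: geo_fin.
have PlsB : P (lim_sup_set Bq) = 0%E.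
  apply: lim_sup_set_cvg0 => //.
  apply: le_lt_trans; first apply: (lee_nneseries (v := fun k => (q * rho2 ^+ k)%:E)).
  - by move=> *; exact: measure_ge0.
  - by move=> n _; exact: PBq.
  by apply: geo_fin => //; exact: ltW.
have sub : [set w | short_gap_io eps (fun n => Z n w)] `<=`
    lim_sup_set Dk `|` lim_sup_set Bq.
  move=> w /= Hw.
  case: (pselect (lim_sup_set Dk w)) => hD; [by left|right].
  have [K HK] : exists K, forall j, (K <= j)%N -> ~ Dk j w.
    apply: contrapT => nK; apply: hD => n _.
    apply: contrapT => hn; apply: nK; exists n => j nj Dj; apply: hn.
    by exists j.
  move=> n0 _.
  set M := (maxn K n0).+1.
  have [i [Ni [t [t' [gt1 [gt2 gap]]]]]] := Hw (2 ^ M)%N.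
  have [c1' zt] := gt_cnt _ _ _ gt1.
  have [c2' zt'] := gt_cnt _ _ _ gt2.
  have i0 : (0 < i)%N by apply: leq_trans Ni; rewrite expn_gt0.
  have ti : (i <= t)%N by rewrite -{1}c1'; apply: cntz_le.
  have t0 : (0 < t)%N by apply: leq_trans ti.
  have tt' : (t < t')%N.
    case/gt_succ: gt2 => t0' [g1' [h _]]; rewrite gt1 in g1'.
    by case: g1' => ->.
  set k := trunc_log 2 t.
  have kt : (2 ^ k <= t)%N := trunc_logP (ltnSn 1) t0.
  have tk : (t < 2 ^ k.+1)%N := trunc_log_ltn t (ltnSn 1).
  have Mk : (M <= k)%N := trunc_log_max (ltnSn 1) (leq_trans Ni ti).
  have Kk : (K <= k.+1)%N.
    by apply: leq_trans (leq_maxl K n0) _; apply: ltnW; apply: leq_trans Mk _.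
  have nD := HK k.+1 Kk.
  have cntb : ((cntz (fun n => Z n w) (2 ^ k.+1))%:R : R) < sig ^+ k.+1.
    rewrite ltNge; apply/negP => h; apply: nD; split => //.
    by rewrite /= G_cnt gee0_abs ?lee_fin.
  have ib : (i%:R : R) <= sig ^+ k.+1.
    apply: ltW; apply: le_lt_trans cntb; rewrite ler_nat -c1'.
    by apply: cntz_mono; exact: ltnW.
  have gapq : ((t' - t)%:R : R) <= q ^+ k.+1.
    apply: ltW; apply: (lt_le_trans gap).
    apply: (@le_trans _ _ ((i%:R : R) `^ (1 + e))).
      by apply: ler_powR; [rewrite ler1n | lra].
    rewrite /q -powR_EX.
    apply: ge0_ler_powR => //; first lra.
      by rewrite nnegrE ler0n.
    by rewrite nnegrE exprn_ge0 // ltW.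
  have dL : (t' - t <= Lk q k)%N.
    by rewrite /Lk truncn_ge_nat // exprn_ge0 // ltW.
  exists k.
    by apply: leq_trans (leq_maxr K n0) _; apply: ltnW.
  rewrite /Bq /Bk; apply: (@in_bigsetU _ (2 ^ k)%N (fun n => \big[setU/set0]_(dd < Lk q k)
    (A Z (2 ^ k + n)%N `&` A Z (2 ^ k + n + dd.+1)%N)) w (t - 2 ^ k)%N).
    by rewrite ltn_subLR // addnn -mul2n -expnS.
  rewrite subnKC //.
  apply: (@in_bigsetU _ (Lk q k) (fun dd =>
    (A Z t `&` A Z (t + dd.+1)%N)) w (t' - t).-1).
    by rewrite prednK ?subn_gt0 //; apply: leq_trans dL.
  rewrite prednK ?subn_gt0 // subnKC; last exact: ltnW.
  split; rewrite /A /= => E0.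
    by have := zt i0; rewrite E0.
  by have := zt' isT; rewrite E0.
apply/eqP; rewrite eq_le measure_ge0 andbT.
apply: le_trans; first apply: (le_measure _ _ _ sub).
- by rewrite inE; exact: (@mS _ _ Z (mZ hZ) R eps).
- by rewrite inE; apply: measurableU; exact: mlimsup.
apply: le_trans; first apply: measureU2; try exact: mlimsup.
rewrite [X in (X + _)%E](_ : _ = 0%E); last exact: PlsD.
rewrite [X in (_ + X)%E](_ : _ = 0%E); last exact: PlsB.
by rewrite adde0.
Qed.
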